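(* Let $A=kQ/I$ with reduced Gröbner–Shirshov basis $\mathcal G$, $W=\mathrm{Tip}(\mathcal G)$, Anick chains $W^{(i)}$, and two-sided Anick resolution $(P_*,d^{\mathcal M})$, all as described in the context. Suppose that for every $n\ge1$ and every $(n-1)$-chain $(w_1,\dots,w_n)\in W^{(n-1)}$, the path $w=w_1\cdots w_n$ does not converge to $u=u_1\cdots u_{n-1}$ for any $(u_1,\dots,u_{n-1})\in W^{(n-2)}$. Then the two-sided Anick resolution $(P_*,d^{\mathcal M})$ is minimal.
   Context: Quiver and order: - $k$ is a field and $Q$ a finite quiver. Paths are written left to right; vertices are paths of length $0$. - $\mathcal B$ is the set of all paths, $\mathcal B_+$ the set of paths of positive length, $Q_0$ the vertices and $Q_1$ the arrows. - Fix an admissible well-order $\prec$ on $\mathcal B$ (a well-order compatible with multiplication). $\mathrm{Tip}(r)$ is the $\prec$-largest path with nonzero coefficient in $r\ne0$. Ideal and Gröbner–Shirshov basis: - $I\subseteq kQ$ is a two-sided ideal contained in the span of paths of length $\ge2$, and $A=kQ/I$. - $\mathrm{Tip}(I)=\{\mathrm{Tip}(r):0\ne r\in I\}$ and $\mathrm{NonTip}(I)=\mathcal B\setminus\mathrm{Tip}(I)$, which is a basis of $A$. - $\mathcal G$ is the reduced Gröbner–Shirshov basis of $I$: $\mathcal G\subseteq I$; $W=\mathrm{Tip}(\mathcal G)$ generates $\langle\mathrm{Tip}(I)\rangle$; each element has tip coefficient $1$ and non-tip part in $\mathrm{span}\,\mathrm{NonTip}(I)$; no element of $W$ is a factor of another.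 Ufnarovskiĭ graph and chains: - The Ufnarovskiĭ graph $Q_W$ has vertices $Q_0\cup Q_1\cup\{$proper right factors of elements of $W\}$. - Its arrows are $e\to x$ ($e\in Q_0$, $x\in Q_1$, $x=ex$), together with $u\to v$ whenever $uv\in\mathcal B\cap\langle\mathrm{Tip}(I)\rangle$ and no proper left factor of $uv$ lies in $\langle\mathrm{Tip}(I)\rangle$. - An $i$-chain ($i\ge0$) is $(v_1,\dots,v_{i+1})\in\mathcal B_+^{i+1}$ such that $e\to v_1\to\cdots\to v_{i+1}$ is a path in $Q_W$ for some $e\in Q_0$. $W^{(i)}$ is the set of $i$-chains and $W^{(-1)}=Q_0$. Reduction and convergence: - For $w,w'\in\mathcal B$, $w$ reduces in one step to $w'$ if there are $u,v\in\mathcal B$ and $f\in I$ with $\mathrm{Tip}(f)\in W$, $w=u\,\mathrm{Tip}(f)\,v$, and $w'=upv$ for some path $p\ne\mathrm{Tip}(f)$ appearing with nonzero coefficient in $f$. - $w$ converges to $w'$ if there is a finite sequence of one or more reduction steps $w\Rightarrow u_1\Rightarrow\cdots\Rightarrow u_m\Rightarrow w'$ with $u_1,\dots,u_m\in\mathcal B$. Bar resolution and the quiver $\overline{Q_B}$: - $E=\bigoplus_{e\in Q_0}ke$, $A_+=\mathrm{span}(\mathrm{NonTip}(I)\setminus Q_0)$, $A^e=A\otimes_kA^{op}$. - The reduced bar resolution $B(A,A)_n=A\otimes_EA_+^{\otimes_En}\otimes_EA$ has differential $$d[a_1|\cdots|a_n]=a_1[a_2|\cdots|a_n]+\sum_{i=1}^{n-1}(-1)^i[\cdots|a_ia_{i+1}|\cdots]+(-1)^n[a_1|\cdots|a_{n-1}]a_n.$$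 It decomposes as $\bigoplus A^e\cdot[w_1|\cdots|w_n]$ over sequences of elements $w_i\in\mathrm{NonTip}(I)\setminus Q_0$ with $w_1\cdots w_n$ a path. - The weighted quiver $\overline{Q_B}$ has these sequences as vertices, with degree-$0$ vertices $Q_0$. - From $(w_1,\dots,w_n)$ there is an arrow $d_n^0$ to $(w_2,\dots,w_n)$ of weight $w_1\otimes1$. - For $1\le i\le n-1$ and each term $\lambda_ju_j$ of the normal form $w_iw_{i+1}\equiv\sum_j\lambda_ju_j \bmod I$ (distinct $u_j\in\mathrm{NonTip}(I)\setminus Q_0$, $\lambda_j\ne0$), there is an arrow $d_n^i$ to $(w_1,\dots,w_{i-1},u_j,w_{i+2},\dots,w_n)$ of weight $(-1)^i\lambda_j\otimes1$. - There is an arrow $d_n^n$ to $(w_1,\dots,w_{n-1})$ of weight $(-1)^n1\otimes w_n$. - Here $a\otimes b$ denotes the $A^e$-map sending the source generator to $a\cdot(\text{target generator})\cdot b$. The matching $\mathcal M$ and $\overline{Q_B}^{\mathcal M}$: - For $w\in\mathcal B$, $V_{w,i}$ is the set of vertices $(w_1,\dots,w_n)$ with $w_1\cdots w_n=w$ and $i\ge -1$ maximal such that $(w_1,\dots,w_{i+1})$ is an $i$-chain. - $\mathcal M$ is the set of arrows $(w_1,\dots,w_{i+1},w'_{i+2},w''_{i+2},w_{i+3},\dots,w_n)\to(w_1,\dots,w_n)$ with $(w_1,\dots,w_n)\in V_{w,i}$, $w'_{i+2}w''_{i+2}=w_{i+2}$ (both of positive length), and source in $V_{w,i+1}$. - $\overline{Q_B}^{\mathcal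 M}$ is obtained by replacing each arrow of $\mathcal M$ of weight $\phi$ by a reversed dotted arrow of weight $-\phi^{-1}$; the other arrows are called thick. A zigzag path alternates dotted and thick arrows. The two-sided Anick resolution: - $P_n=A\otimes_EkW^{(n-1)}\otimes_EA\cong\bigoplus_{(w_1,\dots,w_n)\in W^{(n-1)}}A^e\cdot[w_1|\cdots|w_n]$. - The component of $d^{\mathcal M}_n$ from the summand of an $(n-1)$-chain to that of an $(n-2)$-chain is the sum, over all zigzag paths in $\overline{Q_B}^{\mathcal M}$ between them, of the composites of the arrow weights. - It is a resolution of $A$ by projective $A$-bimodules, augmented by multiplication $P_0=A\otimes_EA\to A$. Minimality: a projective bimodule resolution $(P_*,d_* )$ of an $A$-bimodule is minimal if the induced maps $1\otimes d_*\otimes1:E\otimes_AP_*\otimes_AE\to E\otimes_AP_{*-1}\otimes_AE$ are all zero. *)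

(* Defs.v *)
From HB Require Import structures.
From mathcomp Require Import all_boot all_order all_algebra.
From Stdlib Require Import ClassicalEpsilon Relation_Operators.
Set Implicit Arguments. Unset Strict Implicit. Unset Printing Implicit Defensive.
Import Order.TTheory GRing.Theory Num.Theory.

Record quiver := Quiver {
  qv : finType; qa : finType; qsrc : qa -> qv; qtgt : qa -> qv }.

Section Anick.
Variable Q : quiver.

(* A (candidate) path: start vertex and list of arrows, read left to right.
   Vertices are the paths (e, [::]). *)
Definition qpath := (qv Q * seq (qa Q))%type.

Definition valid (p : qpath) : bool :=
  match p.2 with
  | [::] => true
  | a :: s => (qsrc a == p.1) && path (fun a b => qtgt a == qsrc b) a s
  end.

Definition pend (p : qpath) : qv Q := last p.1 (map (@qtgt Q) p.2).
Definition plen (p : qpath) : nat := size p.2.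
Definition pcat (p q : qpath) : qpath := (p.1, p.2 ++ q.2).
Definition vtx (e : qv Q) : qpath := (e, [::]).

Definition factor (p w : qpath) : Prop :=
  exists u v, valid u /\ valid v /\ pend u = p.1 /\ pend p = v.1 /\
    w = pcat (pcat u p) v.
Definition proper_left_factor (p w : qpath) : Prop :=
  valid p /\ exists q, valid q /\ 0 < plen q /\ pend p = q.1 /\ w = pcat p q.
Definition proper_right_factor (p w : qpath) : Prop :=
  valid p /\ exists q, valid q /\ 0 < plen q /\ pend q = p.1 /\ w = pcat q p.

Variable k : fieldType.

(* Elements of kQ: coefficient functions with finite support on valid paths. *)
Definition kq := qpath -> k.
Definition is_kq (f : kq) : Prop :=
  (exists s : seq qpath, forall p, f p != 0%R -> p \in s) /\
  (forall p, f p != 0%R -> valid p).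
Definition kzero : kq := fun _ => 0%R.
Definition kadd (f g : kq) : kq := fun p => (f p + g p)%R.
Definition kscale (c : k) (f : kq) : kq := fun p => (c * f p)%R.
Definition ksub (f g : kq) : kq := fun p => (f p - g p)%R.
Definition pel (p : qpath) : kq := fun q => if q == p then 1%R else 0%R.
Definition kone : kq := fun q => if q.2 is [::] then 1%R else 0%R.
Definition kmul (f g : kq) : kq := fun w =>
  if valid w then
    (\sum_(i < (plen w).+1)
       f (w.1, take i w.2) * g (pend (w.1, take i w.2), drop i w.2))%R
  else 0%R.

Definition admissible (ord : rel qpath) : Prop :=
  (forall p, valid p -> ~~ ord p p) /\
  (forall p q r, valid p -> valid q -> valid r -> ord p q -> ord q r -> ord p r) /\
  (forall p q, valid p -> valid q -> p <> q -> ord p q \/ ord q p) /\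
  (forall P : qpath -> Prop, (exists p, valid p /\ P p) ->
     exists m, valid m /\ P m /\ forall q, valid q -> P q -> ~~ ord q m) /\
  (forall p q u v, valid p -> valid q -> valid u -> valid v -> ord p q ->
     pend u = p.1 -> pend u = q.1 -> pend p = v.1 -> pend q = v.1 ->
     ord (pcat (pcat u p) v) (pcat (pcat u q) v)).

Definition is_ideal (I : kq -> Prop) : Prop :=
  (forall f g, (forall p, f p = g p) -> I f -> I g) /\
  (forall f, I f -> is_kq f) /\
  I kzero /\
  (forall f g, I f -> I g -> I (kadd f g)) /\
  (forall c f, I f -> I (kscale c f)) /\
  (forall f g, is_kq g -> I f -> I (kmul g f) /\ I (kmul f g)) /\
  (forall f p, I f -> f p != 0%R -> 2 <= plen p).

Variable ord : rel qpath.
Variable I : kq -> Prop.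
Variable G : kq -> Prop.

Definition is_tip (f : kq) (p : qpath) : Prop :=
  f p != 0%R /\ forall q, f q != 0%R -> q = p \/ ord q p.
Definition inTipI (p : qpath) : Prop := exists f, I f /\ is_tip f p.
Definition nontip (p : qpath) : Prop := valid p /\ ~ inTipI p.
Definition inTipIdeal (w : qpath) : Prop :=
  valid w /\ exists t, inTipI t /\ factor t w.

Definition inW (p : qpath) : Prop := exists g, G g /\ is_tip g p.

Definition reduced_GS : Prop :=
  (forall g, G g -> I g /\ exists t, is_tip g t /\ g t = 1%R /\
       forall q, q <> t -> g q != 0%R -> nontip q) /\
  (forall w, inTipI w -> exists t, inW t /\ factor t w) /\
  (forall p q, inW p -> inW q -> factor p q -> p = q).

Definition uf_vertex (p : qpath) : Prop :=
  valid p /\ (plen p <= 1 \/ exists w, inW w /\ proper_right_factor p w).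
Definition uf_arrow (u v : qpath) : Prop :=
  uf_vertex u /\ uf_vertex v /\
  ((plen u = 0 /\ plen v = 1 /\ v.1 = u.1) \/
   (pend u = v.1 /\ inTipIdeal (pcat u v) /\
    forall p, proper_left_factor p (pcat u v) -> ~ inTipIdeal p)).
Fixpoint uf_walk (x : qpath) (s : seq qpath) : Prop :=
  match s with
  | [::] => True
  | v :: s' => uf_arrow x v /\ uf_walk v s'
  end.
(* (v_1,...,v_m) is an (m-1)-chain *)
Definition is_chainseq (s : seq qpath) : Prop :=
  s <> [::] /\ (forall v, v \in s -> valid v /\ 0 < plen v) /\
  exists e, uf_walk (vtx e) s.

(* Vertices of the quiver Q_B: (e, [w_1;...;w_n]); for n = 0 it is the
   vertex e of Q_0, for n >= 1 the label e is the start of w_1. *)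
Definition qbv := (qv Q * seq qpath)%type.
Definition composable (s : seq qpath) : bool :=
  if s is w :: s' then path (fun a b => pend a == b.1) w s' else true.
Definition qb_vertex (x : qbv) : Prop :=
  (forall w, w \in x.2 -> nontip w /\ 0 < plen w) /\ composable x.2 /\
  (if x.2 is w :: _ then x.1 = w.1 else True).
Definition qb_prod (x : qbv) : qpath := foldl pcat (vtx x.1) x.2.
(* W^(n-1) for n = size x.2 (W^(-1) = Q_0) *)
Definition chain_v (x : qbv) : Prop :=
  if x.2 is w :: _ then is_chainseq x.2 /\ x.1 = w.1 else True.

Definition reduces (w w' : qpath) : Prop :=
  exists u v f t p, valid u /\ valid v /\ I f /\ is_tip f t /\ inW t /\
    pend u = t.1 /\ pend t = v.1 /\ w = pcat (pcat u t) v /\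
    p <> t /\ f p != 0%R /\ valid p /\ pend u = p.1 /\ pend p = v.1 /\
    w' = pcat (pcat u p) v.
Definition converges (w w' : qpath) : Prop := clos_trans _ reduces w w'.

(* The algebra A = kQ/I: elements are supported on NonTip(I); normal forms *)
Definition inA (g : kq) : Prop := is_kq g /\ forall p, g p != 0%R -> nontip p.
Definition NF (f : kq) : kq :=
  epsilon (inhabits kzero) (fun g => inA g /\ I (ksub f g)).
Definition amul (a b : kq) : kq := NF (kmul a b).
Definition oneA : kq := kone.

(* Label (i, u): d_n^i; for 1 <= i <= n-1, u is the term
   of the normal form of w_i w_{i+1}; for i = 0 (resp. n), u = w_1 (resp. w_n).
   Weights are pure tensors (a, b) meaning the A^e-map gen |-> a * gen * b. *)
Definition lab := (nat * qpath)%type.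
Definition nthw (x : qbv) (j : nat) : qpath := nth (vtx x.1) x.2 j.

Definition qb_arrow (x : qbv) (l : lab) (y : qbv) : Prop :=
  let n := size x.2 in let i := l.1 in let u := l.2 in
  qb_vertex x /\ 1 <= n /\
  (if i == 0%N then u = nthw x 0 /\ y = (pend (nthw x 0), behead x.2)
   else if i == n then u = nthw x n.-1 /\ y = ((nthw x 0).1, take n.-1 x.2)
   else (i < n)%N /\ NF (kmul (pel (nthw x i.-1)) (pel (nthw x i))) u != 0%R /\
        y = (x.1, take i.-1 x.2 ++ u :: drop i.+1 x.2)).

Definition mid_coef (x : qbv) (l : lab) : k :=
  ((-1) ^+ l.1 * NF (kmul (pel (nthw x l.1.-1)) (pel (nthw x l.1))) l.2)%R.

Definition qb_weight (x : qbv) (l : lab) : kq * kq :=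
  let n := size x.2 in let i := l.1 in
  if i == 0%N then (pel (nthw x 0), oneA)
  else if i == n then (kscale ((-1) ^+ n)%R oneA, pel (nthw x n.-1))
  else (kscale (mid_coef x l) oneA, oneA).

Definition prefix_chain (s : seq qpath) (j : nat) : Prop :=
  j = 0%N \/ is_chainseq (take j s).
(* x in V_{w, j-1}: j is the maximal length of a chain prefix *)
Definition maxchain (s : seq qpath) (j : nat) : Prop :=
  (j <= size s)%N /\ prefix_chain s j /\
  forall j', (j < j')%N -> (j' <= size s)%N -> ~ prefix_chain s j'.

Definition matched (x : qbv) (l : lab) (y : qbv) : Prop :=
  qb_arrow x l y /\ (1 <= l.1)%N /\ (l.1 < size x.2)%N /\
  l.2 = pcat (nthw x l.1.-1) (nthw x l.1) /\
  maxchain y.2 l.1.-1 /\ maxchain x.2 l.1.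

Definition thick (x : qbv) (l : lab) (y : qbv) : Prop :=
  qb_arrow x l y /\ ~ matched x l y.

(* weight -phi^{-1} of the dotted arrow reversing the matched arrow x -l-> y *)
Definition dot_weight (x : qbv) (l : lab) : kq * kq :=
  (kscale (- (mid_coef x l)^-1)%R oneA, oneA).

(* composite in A^e = A (x) A^op: first (a1,b1), then (a2,b2) *)
Definition wcomp (w1 w2 : kq * kq) : kq * kq :=
  (amul w1.1 w2.1, amul w2.2 w1.2).

(* zigzag paths: alternately thick (down) and dotted (up), starting and
   ending with a thick arrow *)
Fixpoint zz_ok (x : qbv) (z : seq (lab * qbv)) (th : bool) : Prop :=
  match z with
  | [::] => True
  | (l, y) :: z' =>
      (if th then thick x l y else matched y l x) /\ zz_ok y z' (~~ th)
  end.
Fixpoint zz_wt (x : qbv) (z : seq (lab * qbv)) (th : bool) (acc : kq * kq)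
    : kq * kq :=
  match z with
  | [::] => acc
  | (l, y) :: z' =>
      zz_wt y z' (~~ th) (wcomp acc (if th then qb_weight x l else dot_weight y l))
  end.
Definition zigzag (c c' : qbv) (z : seq (lab * qbv)) : Prop :=
  zz_ok c z true /\ odd (size z) /\ last c (unzip2 z) = c'.

(* Minimality of (P_*, d^M): each component of 1 (x) d^M (x) 1 from the
   summand of an (n-1)-chain c to that of an (n-2)-chain c' is zero.
   The component of d^M is sum_z a_z (x) b_z over zigzag paths z; after
   applying E (x)_A - (x)_A E it becomes (sum_z a_z(s) b_z(t)) c', where
   s, t are the start and end vertices of c'. *)
Definition anick_minimal : Prop :=
  forall (n : nat) (c c' : qbv), (1 <= n)%N ->
    chain_v c -> size c.2 = n -> chain_v c' -> size c'.2 = n.-1 ->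
    forall zs : seq (seq (lab * qbv)), uniq zs ->
      (forall z, z \in zs <-> zigzag c c' z) ->
      (\sum_(z <- zs)
        (zz_wt c z true (oneA, oneA)).1 (vtx c'.1) *
        (zz_wt c z true (oneA, oneA)).2 (vtx (pend (qb_prod c'))) = 0)%R.

End Anick.

(* Main.v *)
Require Import Defs.
From HB Require Import structures.
From mathcomp Require Import all_boot all_order all_algebra.
From mathcomp Require Import zify ring.
From Stdlib Require Import Lia ClassicalEpsilon Relation_Operators Classical FunctionalExtensionality.
Set Implicit Arguments. Unset Strict Implicit. Unset Printing Implicit Defensive.
Import Order.TTheory GRing.Theory Num.Theory.

Section Paths.
Variable Q : quiver.
Implicit Types (a b p q : qpath Q).

Lemma valid_cat (e : qv Q) l1 l2 :
  valid (e, l1 ++ l2) = valid (e, l1) && valid (pend (e, l1), l2).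
Proof.
case: l1 => [|a l1] /=; first by rewrite /pend.
rewrite /valid /= cat_path /pend /= last_map -andbA; congr (_ && (_ && _)).
case: l2 => [|b l2] //=; by rewrite eq_sym.
Qed.

Lemma pend_cat (e : qv Q) l1 l2 : pend (e, l1 ++ l2) = pend (pend (e, l1), l2).
Proof. by rewrite /pend /= map_cat last_cat. Qed.

Lemma valid_pcat a b : valid a -> valid b -> pend a = b.1 -> valid (pcat a b).
Proof.
case: a => e l1; case: b => e2 l2 va vb /= he.
by rewrite /pcat /= valid_cat va he.
Qed.

Lemma valid_pcatl a b : valid (pcat a b) -> valid a.
Proof. by case: a => e l1; rewrite /pcat /= valid_cat => /andP[]. Qed.

Lemma valid_pcatr a b : valid (pcat a b) -> valid (pend a, b.2).
Proof. by case: a => e l1; rewrite /pcat /= valid_cat => /andP[]. Qed.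

Lemma pend_pcat a b : pend a = b.1 -> pend (pcat a b) = pend b.
Proof.
case: a => e l1; case: b => e2 l2 /= he.
by rewrite /pcat /= pend_cat he.
Qed.

Lemma plen_pcat a b : plen (pcat a b) = plen a + plen b.
Proof. by rewrite /plen /pcat /= size_cat. Qed.

Lemma foldl_pcat (X : qpath Q) s :
  foldl (@pcat Q) X s = (X.1, X.2 ++ flatten (map snd s)).
Proof.
elim: s X => [|w s IH] X /=; first by rewrite cats0; case: X.
by rewrite IH /pcat /= catA.
Qed.

Lemma qb_prodE (x : qbv Q) : qb_prod x = (x.1, flatten (map snd x.2)).
Proof. by rewrite /qb_prod foldl_pcat. Qed.

Lemma factor_len p w : factor p w -> plen p <= plen w.
Proof.
case=> [u [v [_ [_ [_ [_ ->]]]]]]; rewrite !plen_pcat.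
lia.
Qed.

Lemma factor_trans p q r : factor p q -> factor q r -> factor p r.
Proof.
move=> [u [v [vu [vv [hu [hv eq]]]]]] [u' [v' [vu' [vv' [hu' [hv' er]]]]]].
subst q r.
exists (pcat u' u), (pcat v v'); split.
  by apply: valid_pcat => //; rewrite hu'.
split.
  apply: valid_pcat => //. rewrite -hv' (@pend_pcat (pcat u p) v) //.
  by rewrite pend_pcat.
split; first by rewrite pend_pcat.
split; first by [].
by rewrite /pcat /= !catA.
Qed.

Variable k : fieldType.
Implicit Types (f g h : kq Q k).
Local Open Scope ring_scope.

Lemma kmul_nz f g w : kmul f g w != 0 ->
  valid w /\ exists i, (i <= size w.2)%N /\ f (w.1, take i w.2) != 0 /\
     g (pend (w.1, take i w.2), drop i w.2) != 0.
Proof.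
rewrite /kmul; case: ifP => [vw|]; last by rewrite eqxx.
move=> H; split=> //; apply: NNPP => hn; move: H; rewrite big1 ?eqxx // => i _.
apply/eqP; rewrite mulf_eq0; apply: contraT; rewrite negb_or => /andP [h1 h2].
exfalso; apply: hn.
by exists i; split; [rewrite -ltnS ltn_ord|split].
Qed.

Lemma kmul_vtx f g (e : qv Q) : kmul f g (vtx e) = f (vtx e) * g (vtx e).
Proof. by rewrite /kmul /= big_ord1. Qed.

Lemma pel_nz (p q : qpath Q) : pel k p q != 0 -> q = p.
Proof. rewrite /pel; case: (q =P p) => // _; by rewrite eqxx. Qed.

Lemma pel_eq (p : qpath Q) : pel k p p = 1.
Proof. by rewrite /pel eqxx. Qed.

Lemma kmul_pelR f x b : valid (pcat x b) -> pend x = b.1 ->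
  kmul f (pel k b) (pcat x b) = f x.
Proof.
move=> v he; rewrite /kmul v /= /plen /= size_cat.
have H : (size x.2 < (size x.2 + size b.2).+1)%N by rewrite ltnS leq_addr.
rewrite (bigD1 (Ordinal H)) //= big1 ?addr0.
  rewrite take_size_cat // drop_size_cat // -!surjective_pairing he -surjective_pairing.
  by rewrite pel_eq mulr1.
move=> i /eqP hi; apply/eqP; rewrite mulf_eq0; apply/orP; right.
apply/eqP; rewrite /pel; case: eqP => // /(congr1 (fun z => size z.2)) /=.
rewrite size_drop size_cat => hs; exfalso; apply: hi; apply: val_inj => /=.
have := ltn_ord i; rewrite ltnS; lia.
Qed.

Lemma kmul_pelL a g y : valid (pcat a y) -> pend a = y.1 ->
  kmul (pel k a) g (pcat a y) = g y.
Proof.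
move=> v he; rewrite /kmul v /= /plen /= size_cat.
have H : (size a.2 < (size a.2 + size y.2).+1)%N by rewrite ltnS leq_addr.
rewrite (bigD1 (Ordinal H)) //= big1 ?addr0.
  rewrite take_size_cat // drop_size_cat //.
  case: a {v H} he => ?? /= ->; rewrite pel_eq mul1r; by case: y.
move=> i /eqP hi; apply/eqP; rewrite mulf_eq0; apply/orP; left.
apply/eqP; rewrite /pel; case: eqP => // /(congr1 (fun z => size z.2)) /=.
rewrite size_take size_cat => hs; exfalso; apply: hi; apply: val_inj => /=.
have := ltn_ord i; rewrite ltnS. move: hs; case: ltnP; lia.
Qed.

Lemma kmul_pel_pel a b : valid a -> valid b -> pend a = b.1 ->
  kmul (pel k a) (pel k b) = pel k (pcat a b).
Proof.
move=> va vb he; apply: functional_extensionality => w.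
have [->|ne] := eqVneq w (pcat a b).
  by rewrite kmul_pelL ?pel_eq // valid_pcat.
have -> : pel k (pcat a b) w = 0 by rewrite /pel (negbTE ne).
apply/eqP; apply: contraT => /kmul_nz.
move=> [vw [i [_ [/pel_nz h1 /pel_nz h2]]]]; case/eqP: ne.
case: w vw h1 h2 => e l /= _ h1 h2.
by rewrite /pcat -h1 -h2 /= cat_take_drop.
Qed.

Definition supp f (s : seq (qpath Q)) := forall p, f p != 0 -> p \in s.

Lemma is_kq_kmul f g : is_kq f -> is_kq g -> is_kq (kmul f g).
Proof.
move=> [[s1 h1] _] [[s2 h2] _]; split; last by move=> p /kmul_nz[].
exists [seq pcat x y | x <- s1, y <- s2] => w /kmul_nz [_ [i [_ [hf hg]]]].
have -> : w = pcat (w.1, take i w.2) (pend (w.1, take i w.2), drop i w.2).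
  by rewrite /pcat /= cat_take_drop; case: w {hf hg}.
by apply: allpairs_f; [apply: h1 | apply: h2].
Qed.

Lemma is_kq_pel p : valid p -> is_kq (pel k p).
Proof. by move=> vp; split; [exists [:: p] => q /pel_nz ->; rewrite inE | move=> q /pel_nz ->]. Qed.

Lemma is_kq_oneA : is_kq (oneA k : kq Q k).
Proof.
rewrite /oneA /kone; split.
  exists [seq vtx e | e <- enum (qv Q)] => q; case: q => e l /=.
  case: l => [_|a l]; last by rewrite eqxx.
  by apply: map_f; rewrite mem_enum.
by move=> [e l] /=; case: l => [//|a l]; rewrite eqxx.
Qed.

Lemma is_kq_scale c f : is_kq f -> is_kq (kscale c f).
Proof.
move=> [[s h1] h2]; split; first exists s.
  all: move=> p; rewrite /kscale mulf_eq0 negb_or => /andP[_ hp].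
  exact: h1. exact: h2.
Qed.

Lemma is_kq_sub f g : is_kq f -> is_kq g -> is_kq (ksub f g).
Proof.
move=> [[s1 h1] v1] [[s2 h2] v2]; split.
  exists (s1 ++ s2) => p; rewrite /ksub mem_cat.
  have [/eqP hf|/h1 ->] := boolP (f p == 0) => //.
  by rewrite hf sub0r oppr_eq0 => /h2 ->; rewrite orbT.
move=> p; rewrite /ksub; have [/eqP hf|/v1 //] := boolP (f p == 0).
by rewrite hf sub0r oppr_eq0 => /v2.
Qed.
End Paths.

Section Main.
Variable Q : quiver.
Variable k : fieldType.
Variable ord : rel (qpath Q).
Variables I G : kq Q k -> Prop.
Hypothesis Hadm : admissible ord.
Hypothesis HI : is_ideal I.
Hypothesis HGS : reduced_GS ord I G.
Local Open Scope ring_scope.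
Implicit Types (f g h : kq Q k) (p q : qpath Q).

Lemma I_ext f g : (forall p, f p = g p) -> I f -> I g.
Proof. by case: HI => H _; apply: H. Qed.
Lemma I_kq f : I f -> is_kq f.
Proof. by case: HI => _ [H _]; apply: H. Qed.
Lemma I_zero : I (@kzero Q k).
Proof. by case: HI => _ [_ []]. Qed.
Lemma I_add f g : I f -> I g -> I (kadd f g).
Proof. by case: HI => _ [_ [_ [H _]]]; apply: H. Qed.
Lemma I_scale c f : I f -> I (kscale c f).
Proof. by case: HI => _ [_ [_ [_ [H _]]]]; apply: H. Qed.
Lemma I_len f p : I f -> f p != 0 -> (2 <= plen p)%N.
Proof. by case: HI => _ [_ [_ [_ [_ [_ H]]]]]; apply: H. Qed.
Lemma I_sub f g : I f -> I g -> I (ksub f g).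
Proof.
move=> hf hg; apply: (@I_ext (kadd f (kscale (-1) g))); last first.
  by apply: I_add => //; apply: I_scale.
by move=> p; rewrite /kadd /kscale /ksub mulN1r.
Qed.
Lemma I_sandwich a b g : valid a -> valid b -> I g ->
  I (kmul (kmul (pel k a) g) (pel k b)).
Proof.
case: HI => _ [_ [_ [_ [_ [H _]]]]] va vb hg.
have h1 := (H _ _ (is_kq_pel k va) hg).1.
exact: (H _ _ (is_kq_pel k vb) h1).2.
Qed.

Lemma ord_irr p : valid p -> ~~ ord p p.
Proof. by case: Hadm => H _; apply: H. Qed.
Lemma ord_trans p q r : valid p -> valid q -> valid r -> ord p q -> ord q r -> ord p r.
Proof. by case: Hadm => _ [H _]; apply: H. Qed.
Lemma ord_tot p q : valid p -> valid q -> p <> q -> ord p q \/ ord q p.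
Proof. by case: Hadm => _ [_ [H _]]; apply: H. Qed.
Lemma ord_mon p q u v : valid p -> valid q -> valid u -> valid v -> ord p q ->
     pend u = p.1 -> pend u = q.1 -> pend p = v.1 -> pend q = v.1 ->
     ord (pcat (pcat u p) v) (pcat (pcat u q) v).
Proof. by case: Hadm => _ [_ [_ [_ H]]]; apply: H. Qed.

Lemma wf_ind (P : qpath Q -> Prop) :
  (forall m, valid m -> (forall q, valid q -> ord q m -> P q) -> P m) ->
  forall m, valid m -> P m.
Proof.
move=> H m vm; apply: NNPP => nP.
case: Hadm => _ [_ [_ [Hwf _]]].
have [m0 [vm0 [nP0 hmin]]] := Hwf (fun p => ~ P p) (ex_intro _ m (conj vm nP)).
apply: nP0; apply: H => // q vq oq; apply: NNPP => nq.
by move: (hmin q vq nq); rewrite oq.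
Qed.

Lemma max_exists (P : qpath Q -> Prop) (s : seq (qpath Q)) :
  (forall x, P x -> x \in s) -> (forall x, P x -> valid x) -> (exists x, P x) ->
  exists m, P m /\ forall q, P q -> q = m \/ ord q m.
Proof.
elim: s P => [|a s IH] P hs hv [x px]; first by move: (hs x px).
have [[y py]|nP'] := classic (exists y, P y /\ y <> a).
  have [m' [[pm' nm'] hm']] : exists m, (P m /\ m <> a) /\
      forall q, (P q /\ q <> a) -> q = m \/ ord q m.
    apply: IH; last by exists y.
      move=> z [pz nz]; move: (hs z pz); rewrite inE; case/orP => // /eqP.
      by move=> /nz.
    by move=> z [pz _]; apply: hv.
  have [pa|npa] := classic (P a); last first.
    exists m'; split=> // q pq; apply: hm'; split=> // qa; apply: npa.
    by rewrite -qa.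
  have [oam|noam] := boolP (ord a m').
    exists m'; split=> // q pq; have [->|qa] := classic (q = a); first by right.
    by apply: hm'.
  have om : ord m' a.
    case: (ord_tot (hv _ pm') (hv _ pa) nm') => // h.
    by rewrite h in noam.
  exists a; split=> // q pq; have [->|qa] := classic (q = a); first by left.
  right; case: (hm' q (conj pq qa)) => [->//|oq].
  exact: ord_trans (hv _ pq) (hv _ pm') (hv _ pa) oq om.
have ha : forall z, P z -> z = a.
  by move=> z pz; apply: NNPP => nz; apply: nP'; exists z.
exists a; split; first by rewrite -(ha x px).
by move=> q /ha ->; left.
Qed.

Lemma tip_exists f : is_kq f -> (exists p, f p != 0) -> exists t, is_tip ord f t.
Proof.
move=> [[s hs] hv] ex.
have [m [pm hm]] := max_exists (P := fun p => f p != 0) hs hv ex.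
by exists m; split.
Qed.

Lemma tip_unique f t t' : is_kq f -> is_tip ord f t -> is_tip ord f t' -> t = t'.
Proof.
move=> [_ hv] [ft ht] [ft' ht']; apply: NNPP => ne.
have vt := hv _ ft; have vt' := hv _ ft'.
case: (ht _ ft') => [e|o1]; first by apply: ne.
case: (ht' _ ft) => [e|o2]; first by apply: ne.
by move: (ord_irr vt); rewrite (ord_trans vt vt' vt o2 o1).
Qed.

Definition Bf f p := f p != 0 /\ inTipI ord I p.
Definition goodnf (S : qpath Q -> Prop) f g :=
  inA ord I g /\ I (ksub f g) /\ (forall p, g p != 0 -> S p).

Lemma nf_base (S : qpath Q -> Prop) f : is_kq f -> (forall p, f p != 0 -> S p) ->
  (forall q, ~ Bf f q) -> goodnf S f f.
Proof.
move=> hf hS hB; split; last split=> //.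
  split=> // p fp; split; first by case: hf => _; apply.
  by move=> ti; apply: (hB p).
by apply: (@I_ext (@kzero Q k)) => [p|]; [rewrite /ksub subrr | exact: I_zero].
Qed.

Lemma reduce_elt m : inTipI ord I m -> valid m ->
  exists h, I h /\ h m = 1 /\
    forall q, h q != 0 -> q = m \/ (reduces ord I G m q /\ ord q m).
Proof.
move=> ti vm; case: HGS => HG1 [HG2 HG3].
have [t [[g0 [Gg0 tg0]] [a [b [va [vb [ha [hb em]]]]]]]] := HG2 _ ti.
have [Ig0 [t' [tg0' [g0t' _]]]] := HG1 _ Gg0.
have g0t : g0 t = 1 by rewrite (tip_unique (I_kq Ig0) tg0 tg0').
have vat : valid (pcat a t) by move: vm; rewrite em => /valid_pcatl.
have vt : valid t by case: (I_kq Ig0) => _; apply; case: tg0.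
exists (kmul (kmul (pel k a) g0) (pel k b)); split; first exact: I_sandwich.
split.
  rewrite em kmul_pelR -?em //; last by rewrite pend_pcat.
  by rewrite kmul_pelL.
move=> q /kmul_nz [vq [i [_ [hF /pel_nz hb']]]].
move: hF => /kmul_nz [_ [j [_ [/pel_nz ha' hg]]]].
move: hg; rewrite ha' => hg.
set r := (pend a, drop j (take i q.2)) in hg.
have vr : valid r by case: (I_kq Ig0) => _; apply.
have eq : q = pcat (pcat a r) b.
  by rewrite -ha' -hb' /pcat /r /= cat_take_drop cat_take_drop -surjective_pairing.
have pr : pend r = b.1.
  rewrite -hb' -[take i q.2](cat_take_drop j) pend_cat.
  by have -> : pend (q.1, take j (take i q.2)) = pend a by rewrite -ha'.
have [rt|rt] := classic (r = t).
  by left; rewrite eq em rt.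
right; have ort : ord r t by case: tg0 => _ /(_ r hg) [].
split.
  exists a, b, g0, t, r; do 4 (split; first by []); split; first by exists g0.
  by do 8 (split; first by []).
rewrite eq em; apply: ord_mon => //.
Qed.

Lemma nf_exists (S : qpath Q -> Prop) :
  (forall p q, S p -> reduces ord I G p q -> S q) ->
  forall f, is_kq f -> (forall p, f p != 0 -> S p) -> exists g, goodnf S f g.
Proof.
move=> Scl.
suff main : forall m, valid m -> forall f, is_kq f -> (forall p, f p != 0 -> S p) ->
    Bf f m -> (forall q, Bf f q -> q = m \/ ord q m) -> exists g, goodnf S f g.
  move=> f hf hS; have [[p bp]|nB] := classic (exists p, Bf f p); last first.
    by exists f; apply: nf_base => // q bq; apply: nB; exists q.
  have [[s hs] hv] := hf.
  have [m [bm hm]] := max_exists (P := Bf f) (s := s)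
      (fun x bx => hs x bx.1) (fun x bx => hv x bx.1) (ex_intro _ p bp).
  exact: (main m (hv _ bm.1) f).
apply: wf_ind => m vm IH f hf hS [fm tim] hm.
have [h [Ih [hm1 hq]]] := reduce_elt tim vm.
set f' := ksub f (kscale (f m) h).
have hf' : is_kq f' by apply: is_kq_sub => //; apply: is_kq_scale; apply: I_kq.
have f'0 : forall q, f' q != 0 -> f q != 0 \/ h q != 0.
  move=> q; rewrite /f' /ksub /kscale; have [->|] := eqVneq (f q) 0; last by left.
  have [->|] := eqVneq (h q) 0; last by right.
  by rewrite mulr0 subrr eqxx.
have hS' : forall p, f' p != 0 -> S p.
  move=> p /f'0 [/hS //|/hq [->|[r _]]]; first exact: hS.
  exact: Scl (hS _ fm) r.
have f'm : f' m = 0 by rewrite /f' /ksub /kscale hm1 mulr1 subrr.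
have hB' : forall q, Bf f' q -> ord q m.
  move=> q [fq tq]; have qm : q <> m by move=> e; move: fq; rewrite e f'm eqxx.
  case: (f'0 _ fq) => [fq'|/hq [//|[_ //]]].
  by case: (hm q (conj fq' tq)).
have [g gg] : exists g, goodnf S f' g.
  have [[p bp]|nB] := classic (exists p, Bf f' p); last first.
    by exists f'; apply: nf_base => // q bq; apply: nB; exists q.
  have [[s hs] hv] := hf'.
  have [m' [bm hm']] := max_exists (P := Bf f') (s := s)
      (fun x bx => hs x bx.1) (fun x bx => hv x bx.1) (ex_intro _ p bp).
  exact: (IH m' (hv _ bm.1) (hB' _ bm) f').
exists g; case: gg => [iA [Ig Sg]]; split=> //; split=> //.
apply: (@I_ext (kadd (ksub f' g) (kscale (f m) h))); last first.
  by apply: I_add => //; apply: I_scale.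
by move=> p; rewrite /kadd /ksub /f' /kscale addrAC subrK.
Qed.

Lemma nf_unique f g1 g2 : inA ord I g1 -> inA ord I g2 ->
  I (ksub f g1) -> I (ksub f g2) -> forall p, g1 p = g2 p.
Proof.
move=> [_ n1] [_ n2] i1 i2.
have Id : I (ksub (ksub f g2) (ksub f g1)) by apply: I_sub.
apply: NNPP => /not_all_ex_not [p hp].
have [t tt] : exists t, is_tip ord (ksub (ksub f g2) (ksub f g1)) t.
  apply: tip_exists; first exact: I_kq.
  exists p; apply/eqP => e; apply: hp; apply/eqP; rewrite -subr_eq0; apply/eqP; rewrite -e /ksub; ring.
have ti : inTipI ord I t by exists (ksub (ksub f g2) (ksub f g1)).
case: tt => ft _; move: ft.
have -> : ksub (ksub f g2) (ksub f g1) t = g1 t - g2 t by rewrite /ksub; ring.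
have [e|/n1 [] //] := eqVneq (g1 t) 0.
by rewrite e sub0r oppr_eq0 => /n2 [].
Qed.

Lemma NF_spec (S : qpath Q -> Prop) :
  (forall p q, S p -> reduces ord I G p q -> S q) ->
  forall f, is_kq f -> (forall p, f p != 0 -> S p) -> goodnf S f (NF ord I f).
Proof.
move=> Scl f hf hS; have [g [iA [Ig Sg]]] := nf_exists Scl hf hS.
have [iA' Ig'] : inA ord I (NF ord I f) /\ I (ksub f (NF ord I f)).
  exact: (epsilon_spec (inhabits (@kzero Q k)) (fun g => inA ord I g /\ I (ksub f g))
          (ex_intro _ g (conj iA Ig))).
split=> //; split=> // p; rewrite (nf_unique iA' iA Ig' Ig); exact: Sg.
Qed.

Lemma NF_true f : is_kq f -> goodnf (fun _ => True) f (NF ord I f).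
Proof. by move=> hf; apply: NF_spec. Qed.

Lemma NF_vtx f e : is_kq f -> NF ord I f (vtx e) = f (vtx e).
Proof.
move=> /NF_true [_ [Ig _]]; apply/eqP; rewrite eq_sym -subr_eq0; apply: contraT.
by move=> /(I_len Ig).
Qed.

Lemma is_kq_amul f g : is_kq f -> is_kq g -> is_kq (amul ord I f g).
Proof. by move=> hf hg; have [[]] := NF_true (is_kq_kmul hf hg). Qed.

Lemma amul_vtx f g e : is_kq f -> is_kq g ->
  amul ord I f g (vtx e) = f (vtx e) * g (vtx e).
Proof. by move=> hf hg; rewrite /amul NF_vtx ?kmul_vtx //; apply: is_kq_kmul. Qed.

Lemma NF_pel_supp p u : valid p -> NF ord I (pel k p) u != 0 ->
  u = p \/ clos_trans _ (reduces ord I G) p u.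
Proof.
move=> vp hu.
pose S := fun q => q = p \/ clos_trans _ (reduces ord I G) p q.
have Scl : forall x y, S x -> reduces ord I G x y -> S y.
  move=> x y [->|cx] r; right; first exact: t_step.
  exact: t_trans cx (t_step _ _ _ _ r).
have [_ [_ hS]] := @NF_spec S Scl (pel k p) (is_kq_pel k vp)
   (fun q hh => or_introl (pel_nz hh)).
exact: hS _ hu.
Qed.
End Main.

Section Main2.
Variable Q : quiver.
Variable k : fieldType.
Variable ord : rel (qpath Q).
Variables I G : kq Q k -> Prop.
Hypothesis Hadm : admissible ord.
Hypothesis HI : is_ideal I.
Hypothesis HGS : reduced_GS ord I G.
Local Open Scope ring_scope.
Implicit Types (f g : kq Q k) (p q : qpath Q).

Definition Rel p q := p = q \/ clos_trans _ (reduces ord I G) p q.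

Lemma Rel_trans p q r : Rel p q -> Rel q r -> Rel p r.
Proof.
case=> [->//|h1] [<-|h2]; right=> //; exact: t_trans h1 h2.
Qed.

Lemma reduces_inv p q : reduces ord I G p q ->
  valid p /\ valid q /\ q.1 = p.1 /\ pend q = pend p.
Proof.
move=> [u [v [f [t [p' [vu [vv [If [tt [_ [hu [ht [-> [_ [_ [vp' [hu' [hp' ->]]]]]]]]]]]]]]]]]].
have vt : valid t by case: (I_kq HI If) => _; apply; case: tt.
split; first by apply: valid_pcat => //; [apply: valid_pcat|rewrite pend_pcat].
split; first by apply: valid_pcat => //; [apply: valid_pcat|rewrite pend_pcat].
split=> //.
by rewrite !pend_pcat // pend_pcat.
Qed.

Lemma conv_inv p q : clos_trans _ (reduces ord I G) p q -> q.1 = p.1 /\ pend q = pend p.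
Proof.
elim=> [x y /reduces_inv [_ [_ []]] //|x y z _ [h1 h2] _ [h3 h4]].
by rewrite h3 h4.
Qed.

Lemma reduces_ctx p q L R : reduces ord I G p q -> valid L -> valid R ->
  pend L = p.1 -> pend p = R.1 ->
  reduces ord I G (pcat (pcat L p) R) (pcat (pcat L q) R).
Proof.
move=> [u [v [f [t [p' [vu [vv [If [tt [Wt [hu [ht [ep [nt [fp [vp' [hu' [hp' eq]]]]]]]]]]]]]]]]]].
move=> vL vR hL hR.
have vt : valid t by case: (I_kq HI If) => _; apply; case: tt.
have pv : pend p = pend v by rewrite ep !pend_pcat // pend_pcat.
exists (pcat L u), (pcat v R), f, t, p'.
have hLu : pend L = u.1 by rewrite hL ep.
split; first exact: valid_pcat.
split; first by apply: valid_pcat => //; rewrite -pv.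
do 5 (split; first by rewrite ?pend_pcat).
split; first by rewrite ep /pcat /= !catA.
do 5 (split; first by rewrite ?pend_pcat).
by rewrite eq /pcat /= !catA.
Qed.

Lemma conv_ctx p q L R : clos_trans _ (reduces ord I G) p q -> valid L -> valid R ->
  pend L = p.1 -> pend p = R.1 ->
  clos_trans _ (reduces ord I G) (pcat (pcat L p) R) (pcat (pcat L q) R).
Proof.
move=> H; elim: H L R => [x y r|x y z c1 IH1 c2 IH2] L R vL vR hL hR.
  by apply: t_step; apply: reduces_ctx.
have [e1 e2] := conv_inv c1.
apply: t_trans (IH1 _ _ vL vR hL hR) (IH2 _ _ vL vR _ _).
  by rewrite e1.
by rewrite e2.
Qed.

Lemma seq_split3 (T : Type) (d : T) s j : (j.+1 < size s)%N ->
  s = take j s ++ nth d s j :: nth d s j.+1 :: drop j.+2 s.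
Proof.
move=> h; rewrite -{1}(cat_take_drop j s) (drop_nth d) ?(drop_nth d _ (n := j.+1)) //.
lia.
Qed.

Lemma valid_flat (s : seq (qpath Q)) e : (forall w, w \in s -> valid w) -> composable s ->
  (if s is w :: _ then e = w.1 else True) -> valid (e, flatten (map snd s)).
Proof.
elim: s e => [//|w s IH] e hv hc he /=; rewrite valid_cat.
have -> : (e, w.2) = w by rewrite he; case: w {hv hc he}.
rewrite hv ?inE ?eqxx //=; apply: IH.
- by move=> z hz; apply: hv; rewrite inE hz orbT.
- by move: hc; clear hv; case: s => //= z s /andP [].
- by move: hc; clear hv; case: s => //= z s /andP [/eqP].
Qed.

Lemma pend_eq_valid (e e' : qv Q) l1 l2 : valid (e, l1 ++ l2) -> valid (e', l2) -> l2 <> [::] ->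
  pend (e, l1) = e'.
Proof.
rewrite valid_cat => /andP [_]; case: l2 => [//|c l2] /=.
by rewrite /valid /= => /andP [/eqP <- _] /andP [/eqP <- _].
Qed.

Lemma qb_vertex_valid (x : qbv Q) : qb_vertex ord I x -> valid (qb_prod x).
Proof.
move=> [hv [hc he]]; rewrite qb_prodE; apply: valid_flat => //.
by move=> w /hv [[]].
Qed.

Lemma nthw_mem (x : qbv Q) j : (j < size x.2)%N -> nthw x j \in x.2.
Proof. by move=> h; apply: mem_nth. Qed.

Lemma mid_rel (x y : qbv Q) l : qb_arrow ord I x l y -> l.1 <> 0%N -> l.1 <> size x.2 ->
  Rel (qb_prod x) (qb_prod y).
Proof.
case: l => i u /= [hx [_ H]] i0 in_.
move: H; rewrite (negbTE (introN eqP i0)) (negbTE (introN eqP in_)).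
case: i i0 in_ => [//|j] _ _ /= [hj [hnf ->]].
set a := nthw x j; set b := nthw x j.+1.
have va : valid a by case: hx => hv _; case: (hv _ (nthw_mem (ltnW hj))) => [[]].
have vb : valid b by case: hx => hv _; case: (hv _ (nthw_mem hj)) => [[]].
have pa : (0 < plen a)%N by case: hx => hv _; case: (hv _ (nthw_mem (ltnW hj))).
have pb : (0 < plen b)%N by case: hx => hv _; case: (hv _ (nthw_mem hj)).
have hab : pend a = b.1.
  case: hx => _ [hc _]; move: hc; rewrite /a /b /nthw.
  case: x.2 hj => [//|w s] /= hj /(pathP (vtx x.1)) /(_ j).
  by rewrite -ltnS => /(_ hj) /eqP.
move: hnf; rewrite kmul_pel_pel // => hnf.
have vab : valid (pcat a b) by apply: valid_pcat.
have E : x.2 = take j x.2 ++ a :: b :: drop j.+2 x.2 := seq_split3 (vtx x.1) hj.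
have [eu|cu] := NF_pel_supp Hadm HI HGS vab hnf.
  left; rewrite !qb_prodE /= eu {1}E !map_cat !flatten_cat /=.
  by rewrite /pcat /= !catA.
right.
set L := (x.1, flatten (map snd (take j x.2))).
set R := (pend (pcat a b), flatten (map snd (drop j.+2 x.2))).
have ex : qb_prod x = pcat (pcat L (pcat a b)) R.
  by rewrite qb_prodE {1}E map_cat flatten_cat /= /pcat /= !catA.
have ey : qb_prod (x.1, take j x.2 ++ u :: drop j.+2 x.2) = pcat (pcat L u) R.
  by rewrite qb_prodE map_cat flatten_cat /= /pcat /= !catA.
have vx := qb_vertex_valid hx; rewrite ex in vx.
have vLp := valid_pcatl vx.
have vL := valid_pcatl vLp.
have hL : pend L = (pcat a b).1.
  apply: (pend_eq_valid vLp); first by case: (pcat a b) vab.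
  by move: pa; rewrite /pcat /plen /=; case: (a.2).
have vR : valid R.
  have := valid_pcatr vx; by rewrite pend_pcat.
rewrite ex ey; exact: conv_ctx.
Qed.

Lemma matched_eq (x y : qbv Q) l : matched ord I G y l x -> qb_prod x = qb_prod y.
Proof.
case: l => i u [[hy [_ H]] /= [i1 [iy [eu _]]]].
move: H; rewrite /= (negbTE (lt0n_neq0 i1)) (ltn_eqF iy).
case: i i1 iy eu => [//|j] _ hj /= eu [_ [_ ->]].
have E := seq_split3 (vtx y.1) hj.
rewrite !qb_prodE /= eu; congr pair.
by rewrite [in RHS]E !map_cat !flatten_cat /= /pcat /= !catA.
Qed.

Definition Zf f := forall e, f (vtx e) = 0.

Lemma Z_pel p : (0 < plen p)%N -> Zf (pel k p).
Proof.
move=> h e; rewrite /pel; case: (vtx e =P p) => // E.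
by move: h; rewrite -E.
Qed.

Lemma amul_Zl f g : is_kq f -> is_kq g -> Zf f -> Zf (amul ord I f g).
Proof. by move=> hf hg z e; rewrite (amul_vtx Hadm HI HGS) // z mul0r. Qed.
Lemma amul_Zr f g : is_kq f -> is_kq g -> Zf g -> Zf (amul ord I f g).
Proof. by move=> hf hg z e; rewrite (amul_vtx Hadm HI HGS) // z mulr0. Qed.

Lemma step_info (x y : qbv Q) (l : lab Q) (th : bool) :
  (if th then thick ord I G x l y else matched ord I G y l x) ->
  let w := if th then qb_weight ord I x l else dot_weight ord I y l in
  is_kq w.1 /\ is_kq w.2 /\ (Zf w.1 \/ Zf w.2 \/ Rel (qb_prod x) (qb_prod y)).
Proof.
case: th => /=; last first.
  move=> hm; split; first by apply: is_kq_scale; apply: is_kq_oneA.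
  split; first exact: is_kq_oneA.
  by right; right; left; rewrite (matched_eq hm).
case: l => i u [ha _]; have [hx [n1 H]] := ha.
have memv : forall j, (j < size x.2)%N -> valid (nthw x j) /\ (0 < plen (nthw x j))%N.
  by move=> j hj; case: hx => hv _; case: (hv _ (nthw_mem hj)) => [[]].
rewrite /qb_weight /=.
have [i0|i0] := eqVneq i 0%N.
  rewrite /=; have [v p] := memv 0%N n1.
  split; first exact: is_kq_pel.
  split; first exact: is_kq_oneA.
  by left; apply: Z_pel.

have [iN|iN] := eqVneq i (size x.2).
  rewrite /=.
  have [v p] : valid (nthw x (size x.2).-1) /\ (0 < plen (nthw x (size x.2).-1))%N.
    by apply: memv; rewrite prednK // ltnSn.
  split; first by apply: is_kq_scale; apply: is_kq_oneA.
  split; first exact: is_kq_pel.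
  by right; left; apply: Z_pel.
rewrite /=.
split; first by apply: is_kq_scale; apply: is_kq_oneA.
split; first exact: is_kq_oneA.
right; right; apply: (mid_rel ha); exact/eqP.
Qed.

Lemma zz_main (z : seq (lab Q * qbv Q)) : forall (x : qbv Q) th acc,
  is_kq acc.1 -> is_kq acc.2 -> zz_ok ord I G x z th ->
  let r := zz_wt ord I x z th acc in
  is_kq r.1 /\ is_kq r.2 /\ (Zf acc.1 -> Zf r.1) /\ (Zf acc.2 -> Zf r.2) /\
  (Zf r.1 \/ Zf r.2 \/ Rel (qb_prod x) (qb_prod (last x (unzip2 z)))).
Proof.
elim: z => [|[l y] z IH] x th acc h1 h2 /=.
  by move=> _; do 4 (split=> //); right; right; left.
move=> [hs hz].
have [w1 [w2 winf]] := step_info hs.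
set w := (if th then qb_weight ord I x l else dot_weight ord I y l) in w1 w2 winf *.
have a1 : is_kq (wcomp ord I acc w).1 by apply: (is_kq_amul Hadm HI HGS).
have a2 : is_kq (wcomp ord I acc w).2 by apply: (is_kq_amul Hadm HI HGS).
have [r1 [r2 [z1 [z2 r3]]]] := IH y (~~ th) _ a1 a2 hz.
split=> //; split=> //.
split; first by move=> z0; apply: z1; apply: amul_Zl.
split; first by move=> z0; apply: z2; apply: amul_Zr.
case: winf => [zw|[zw|rxy]].
- by left; apply: z1; apply: amul_Zr.
- by right; left; apply: z2; apply: amul_Zl.
case: r3 => [|[|ry]]; [by left|by right; left|].
by right; right; apply: Rel_trans rxy ry.
Qed.

Lemma cat_eq_size (T : Type) (l1 l2 X Y : seq T) : l1 ++ X = l2 ++ Y ->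
  size l1 = size l2 -> l1 = l2 /\ X = Y.
Proof.
move=> e hs; split.
  by have := congr1 (take (size l1)) e; rewrite take_size_cat // hs take_size_cat.
by have := congr1 (drop (size l1)) e; rewrite drop_size_cat // hs drop_size_cat.
Qed.

Lemma cat_prefix (T : Type) (l1 l2 X Y : seq T) : l1 ++ X = l2 ++ Y ->
  (size l1 <= size l2)%N -> l2 = l1 ++ drop (size l1) l2.
Proof.
move=> e hs; rewrite -{1}(cat_take_drop (size l1) l2); congr (_ ++ _).
have := congr1 (take (size l1)) e; rewrite take_size_cat // takel_cat //.
Qed.

Lemma inTipI_len t : inTipI ord I t -> (2 <= plen t)%N.
Proof. by move=> [f [If [ft _]]]; apply: (I_len HI If ft). Qed.

Lemma tipIdeal_len w : inTipIdeal ord I w -> (2 <= plen w)%N.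
Proof.
move=> [_ [t [/inTipI_len h /factor_len h2]]]; exact: leq_trans h h2.
Qed.

Lemma ufv_notTip v : uf_vertex ord G v -> inTipIdeal ord I v -> False.
Proof.
move=> [vv [hl|[w0 [Ww0 [_ [q [vq [pq [hq e0]]]]]]]]] hT.
  by have := tipIdeal_len hT; lia.
case: hT => _ [t [tt ft]].
case: HGS => _ [HG2 HG3].
have [t' [Wt' ft']] := HG2 _ tt.
have fv : factor v w0.
  exists q, (vtx (pend v)); do 4 (split=> //).
  by rewrite e0 /pcat /= cats0.
have := HG3 _ _ Wt' Ww0 (factor_trans (factor_trans ft' ft) fv) => et.
have l1 := factor_len ft'; have l2 := factor_len ft.
move: l1; rewrite et e0 plen_pcat; lia.
Qed.

Definition arrow2 (u v : qpath Q) := pend u = v.1 /\ inTipIdeal ord I (pcat u v) /\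
    forall p, proper_left_factor p (pcat u v) -> ~ inTipIdeal ord I p.

Lemma arrow2_of u v : (0 < plen u)%N -> uf_arrow ord I G u v -> arrow2 u v.
Proof. by move=> hu [_ [_ [[h _]|//]]]; move: hu; rewrite h. Qed.

Lemma step_le u v v' D : arrow2 u v -> arrow2 u v' -> v'.2 = v.2 ++ D -> D = [::].
Proof.
move=> [h1 [t1 _]] [h1' [t1' n1']] eD; apply: NNPP => nD.
apply: (n1' (pcat u v)) => //; split; first by case: t1.
exists (pend (pcat u v), D); split.
  case: t1' => vv' _; move: vv'; rewrite /pcat /= eD catA valid_cat.
  by case/andP.
split; first by rewrite /plen /= lt0n size_eq0; apply/eqP.
split=> //.
by rewrite /pcat /= eD catA.
Qed.

Lemma step_eq u v v' X X' : arrow2 u v -> arrow2 u v' -> v.2 ++ X = v'.2 ++ X' ->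
  v = v' /\ X = X'.
Proof.
move=> a a' e.
have e2 : v.2 = v'.2.
  case: (leqP (size v.2) (size v'.2)) => hs.
    have Ep := cat_prefix e hs.
    by have D0 := step_le a a' Ep; rewrite D0 cats0 in Ep.
  have Ep := cat_prefix (esym e) (ltnW hs).
  by have D0 := step_le a' a Ep; rewrite D0 cats0 in Ep.
have [_ eX] := cat_eq_size e (congr1 size e2).
split=> //.
case: a a' => [h1 _] [h1' _].
by rewrite [v]surjective_pairing [v']surjective_pairing -h1 -h1' e2.
Qed.

Lemma walk_det (s : seq (qpath Q)) : forall s' u,
  uf_walk ord I G u s -> uf_walk ord I G u s' -> (0 < plen u)%N ->
  (forall v, v \in s -> (0 < plen v)%N) -> (forall v, v \in s' -> (0 < plen v)%N) ->
  flatten (map snd s) = flatten (map snd s') -> size s = size s'.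
Proof.
elim: s => [|v r IH] [|v' r'] u //= w w' hu hp hp' e.
- have := hp' v' (mem_head _ _); move: e; rewrite /plen.
  by case: (v'.2).
- have := hp v (mem_head _ _); move: e; rewrite /plen.
  by case: (v.2).
case: w => a w; case: w' => a' w'.
have [ev eX] := step_eq (arrow2_of hu a) (arrow2_of hu a') e.
subst v'; congr S; apply: (IH r' v) => //.
- exact: hp (mem_head _ _).
- by move=> z hz; apply: hp; rewrite inE hz orbT.
- by move=> z hz; apply: hp'; rewrite inE hz orbT.
Qed.

Lemma first_step e v : (0 < plen v)%N -> uf_arrow ord I G (vtx e) v ->
  plen v = 1%N /\ v.1 = e.
Proof.
move=> hp [_ [uv [[_ [h1 h2]]|[h1 [hT _]]]]] //.
exfalso; apply: (ufv_notTip uv).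
have ev : v.1 = e by rewrite -h1.
have -> : v = pcat (vtx e) v by rewrite /pcat /= -ev -surjective_pairing.
done.
Qed.

Lemma chain_contra n (c c' : qbv Q) : (1 <= n)%N ->
  chain_v ord I G c -> size c.2 = n -> chain_v ord I G c' -> size c'.2 = n.-1 ->
  qb_prod c = qb_prod c' -> False.
Proof.
move=> n1 cc sc cc' sc'; rewrite !qb_prodE => -[e1 e2].
case: c cc sc e1 e2 => e [|v1 r] //=; first by move=> _ sc; move: n1; rewrite -sc.
move=> [[_ [hp [e0 [a w]]]] ev1] sc e1.
have pv1 := (hp v1 (mem_head _ _)).2.
case: c' cc' sc' e1 => e' [|v1' r'] /= cc' sc' e1.
  by move=> /(congr1 size); rewrite size_cat; move: pv1; rewrite /plen /=; lia.
case: cc' => [[_ [hp' [e0' [a' w']]]] ev1'].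
have pv1' := (hp' v1' (mem_head _ _)).2.
have [l1 f1] := first_step pv1 a.
have [l1' f1'] := first_step pv1' a'.
move=> e2.
have hsz : size v1.2 = size v1'.2 by move: l1 l1'; rewrite /plen => -> ->.
have [ea eb] := cat_eq_size e2 hsz.
have ev : v1 = v1'.
  by rewrite [v1]surjective_pairing [v1']surjective_pairing ea -ev1 -ev1' e1.
subst v1'.
have pl : (0 < plen v1)%N by rewrite l1.
have := walk_det w w' pl (fun z hz => (hp z (@mem_behead _ (v1 :: r) z hz)).2)
  (fun z hz => (hp' z (@mem_behead _ (v1 :: r') z hz)).2) eb.
move: sc sc'; lia.
Qed.
End Main2.

Theorem theorem5p4 (Q : quiver) (k : fieldType) (ord : rel (qpath Q))
  (I G : kq Q k -> Prop) :
  admissible ord -> is_ideal I -> reduced_GS ord I G ->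
  (forall (n : nat) (c c' : qbv Q), (1 <= n)%N ->
     chain_v ord I G c -> size c.2 = n ->
     chain_v ord I G c' -> size c'.2 = n.-1 ->
     ~ converges ord I G (qb_prod c) (qb_prod c')) ->
  anick_minimal ord I G.
Proof.
move=> Hadm HI HGS Hnc n c c' n1 cc sc cc' sc' zs _ hzs.
rewrite big1_seq // => z; rewrite /= => hz; have [hok [_ hlast]] := (hzs z).1 hz.
have [_ [_ [_ [_ H]]]] := zz_main Hadm HI HGS (acc := (oneA k, oneA k))
   (@is_kq_oneA Q k) (@is_kq_oneA Q k) hok.
case: H => [z1|[z2|hr]].
- by rewrite z1 GRing.mul0r.
- by rewrite z2 GRing.mulr0.
rewrite hlast in hr; case: hr => [e|ct].
- by exfalso; exact: (chain_contra HI HGS n1 cc sc cc' sc' e).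
- by exfalso; apply: (Hnc n c c').
Qed.
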